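(* Let $n\ge 3$ and $k\in\{1,\dots,n-1\}$, and let $\Phi^{(n,k)}:M_n\to M_n$ be the linear map $$\Phi^{(n,k)}([a_{ij}])=\operatorname{diag}(b_1,\dots,b_n)-[a_{ij}],\qquad b_i=(n-1)a_{ii}+a_{\sigma_k(i),\sigma_k(i)},$$ where $\sigma_k(i)\equiv i+k \pmod n$ with $\sigma_k(i)\in\{1,\dots,n\}$. If $\gcd(n,k)\neq 1$, then $\Phi^{(n,k)}$ is not an extremal positive linear map.
   Context: $M_n$ denotes the algebra of complex $n\times n$ matrices. A linear map $\phi:M_n\to M_n$ is positive if it maps positive semidefinite matrices to positive semidefinite matrices; $\Phi^{(n,k)}$ is known to be positive. A positive linear map $\phi$ is extremal if whenever $\phi=\phi_1+\phi_2$ with $\phi_1,\phi_2$ positive linear maps, there are nonnegative reals $\lambda_i$ with $\phi_i=\lambda_i\phi$. *)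

(* Defs.v *)
From HB Require Import structures.
From mathcomp Require Import all_boot all_order all_algebra.
From mathcomp Require Import complex.
From mathcomp Require Import reals.
Set Implicit Arguments. Unset Strict Implicit. Unset Printing Implicit Defensive.
Import Order.TTheory GRing.Theory Num.Theory.
Local Open Scope ring_scope.
Local Open Scope complex_scope.

Definition adjmx (R : realType) m n (A : 'M[R[i]]_(m, n)) : 'M[R[i]]_(n, m) :=
  (map_mx (@Num.conj _) A)^T.

Definition psd (R : realType) n (A : 'M[R[i]]_n) : Prop :=
  adjmx A = A /\ forall v : 'cV[R[i]]_n, 0 <= (adjmx v *m A *m v) ord0 ord0.

Definition linmap (R : realType) n (f : 'M[R[i]]_n -> 'M[R[i]]_n) : Prop :=
  forall (a : R[i]) (x y : 'M[R[i]]_n), f (a *: x + y) = a *: f x + f y.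

Definition positive_map (R : realType) n (f : 'M[R[i]]_n -> 'M[R[i]]_n) : Prop :=
  forall A, psd A -> psd (f A).

Definition extremal (R : realType) n (f : 'M[R[i]]_n -> 'M[R[i]]_n) : Prop :=
  linmap f /\ positive_map f /\
  forall f1 f2 : 'M[R[i]]_n -> 'M[R[i]]_n,
    linmap f1 -> linmap f2 -> positive_map f1 -> positive_map f2 ->
    (forall A, f A = f1 A + f2 A) ->
    exists l1 l2 : R, 0 <= l1 /\ 0 <= l2 /\
      (forall A, f1 A = l1%:C *: f A) /\ (forall A, f2 A = l2%:C *: f A).

(* sigma_k(i) = i + k mod n  (0-based indices) *)
Definition sigma n (k : nat) (i : 'I_n) : 'I_n :=
  Ordinal (ltn_pmod (i + k) (leq_ltn_trans (leq0n i) (ltn_ord i))).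

Definition Phi (R : realType) n (k : nat) (A : 'M[R[i]]_n) : 'M[R[i]]_n :=
  diag_mx (\row_i ((n - 1)%:R * A i i + A (sigma k i) (sigma k i))) - A.

(* Main.v *)
Require Import Defs.
From mathcomp Require Import all_boot all_order all_algebra.
From mathcomp Require Import complex reals zify ring.
Set Implicit Arguments. Unset Strict Implicit. Unset Printing Implicit Defensive.
Import Order.TTheory GRing.Theory Num.Theory.

Local Open Scope ring_scope.

Section Psd.
Variable R : realType.
Local Notation C := (R[i]).

Lemma adjmx_mul m p q (A : 'M[C]_(m, p)) (B : 'M[C]_(p, q)) :
  adjmx (A *m B) = adjmx B *m adjmx A.
Proof. by rewrite /adjmx map_mxM trmx_mul. Qed.

Lemma adjmxK m p (A : 'M[C]_(m, p)) : adjmx (adjmx A) = A.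
Proof. by apply/matrixP => i j; rewrite !mxE conjCK. Qed.

Lemma adjmxD m p (A B : 'M[C]_(m, p)) : adjmx (A + B) = adjmx A + adjmx B.
Proof. by apply/matrixP => i j; rewrite !mxE rmorphD. Qed.

Lemma psd_conj n (M A : 'M[C]_n) : psd A -> psd (M *m A *m adjmx M).
Proof.
move=> [hA pA]; split.
  by rewrite !adjmx_mul adjmxK hA mulmxA.
move=> v; have := pA (adjmx M *m v).
by rewrite adjmx_mul adjmxK !mulmxA.
Qed.

Lemma psd0 n : psd (0 : 'M[C]_n).
Proof.
split; first by apply/matrixP => i j; rewrite !mxE rmorph0.
by move=> v; rewrite mulmx0 mul0mx mxE.
Qed.

Lemma psdD n (A B : 'M[C]_n) : psd A -> psd B -> psd (A + B).
Proof.
move=> [hA pA] [hB pB]; split; first by rewrite adjmxD hA hB.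
by move=> v; rewrite mulmxDr mulmxDl mxE addr_ge0.
Qed.

Lemma psd_sum n I (r : seq I) (P : pred I) (F : I -> 'M[C]_n) :
  (forall i, P i -> psd (F i)) -> psd (\sum_(i <- r | P i) F i).
Proof.
move=> h; apply: (big_ind (@psd R n)) => //; [exact: psd0 | exact: psdD].
Qed.

Lemma psd_scale n (N : nat) (A : 'M[C]_n) : psd A -> psd ((N%:R)^-1 *: A).
Proof.
move=> [hA pA]; split.
  apply/matrixP => i j; rewrite !mxE rmorphM fmorphV rmorph_nat.
  move: hA => /matrixP /(_ i j); rewrite !mxE => <-.
  by [].
move=> v; rewrite -scalemxAr -scalemxAl mxE mulr_ge0 //.
by rewrite invr_ge0 ler0n.
Qed.

End Psd.

Local Close Scope ring_scope.
Lemma modlem d a t m : (0 < m)%N -> (t < d)%N ->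
  ((d * a + t) %% (d * m) = d * (a %% m) + t)%N.
Proof.
move=> m0 td.
have -> : (d * a + t = a %/ m * (d * m) + (d * (a %% m) + t))%N.
  by rewrite {1}(divn_eq a m) mulnDr addnA; congr (_ + _)%N; rewrite mulnCA mulnC.
rewrite modnMDl modn_small //.
have := ltn_pmod a m0; nia.
Qed.

Lemma cnt_nat n d q : (0 < d)%N -> (q * d + d <= n)%N ->
  (\sum_(j < n) (j %/ d == q : nat))%N = d.
Proof.
move=> d0 h.
have e j : (j %/ d == q) = (q * d <= j < q * d + d)%N.
  by rewrite eqn_leq -ltnS ltn_divLR // leq_divRL // andbC mulSn addnC.
rewrite -(big_mkord xpredT (fun j => (j %/ d == q) : nat)).
rewrite (@big_cat_nat _ _ _ (q * d)) //=; last lia.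
rewrite (@big_cat_nat _ _ _ (q * d + d) (q*d)) //=; last lia.
rewrite big_nat_cond big1 ?add0n; last first.
  by move=> j /andP[/andP[_ hj] _]; rewrite e; case: andP => //= -[]; lia.
rewrite [X in (_ + X)%N]big_nat_cond [X in (_ + X)%N]big1 ?addn0; last first.
  by move=> j /andP[/andP[hj _] _]; rewrite e; case: andP => //= -[]; lia.
rewrite big_nat_cond (eq_bigr (fun _ => 1%N)); last first.
  by move=> j /andP[hj _]; rewrite e hj.
by rewrite -big_nat_cond sum_nat_const_nat; lia.
Qed.

Section Main.
Variable R : realType.
Local Notation C := (R[i]).
Variables n k d : nat.
Hypotheses (dn : (d %| n)%N) (dk : (d %| k)%N) (d0 : (0 < d)%N) (n0 : (0 < n)%N).

Lemma rho_lt (r : 'I_d) (i : 'I_n) : (d * (i %/ d) + r < n)%N.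
Proof.
have h : (i %/ d < n %/ d)%N by rewrite ltn_divLR // divnK.
have e := divnK dn. have := ltn_ord r. nia.
Qed.

Definition rho r i : 'I_n := Ordinal (rho_lt r i).

Lemma rhoP r (i j : 'I_n) : (rho r i == j) = (i %/ d == j %/ d)%N && (j %% d == r)%N.
Proof.
rewrite -val_eqE /=.
apply/eqP/andP => [<-|[/eqP h1 /eqP h2]].
  rewrite [(d * _)%N]mulnC divnMDl // (divn_small (ltn_ord r)) addn0.
  by rewrite modnMDl (modn_small (ltn_ord r)).
by rewrite [RHS](divn_eq j d) -h1 h2 mulnC.
Qed.

Lemma rho_sigma r (i : 'I_n) : sigma k (rho r i) = rho r (sigma k i).
Proof.
apply: val_inj => /=.
move: (nat_of_ord i) => {}i.
have [m em] : exists m, n = (d * m)%N by exists (n %/ d); rewrite mulnC divnK.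
have [c ec] : exists c, k = (d * c)%N by exists (k %/ d); rewrite mulnC divnK.
have m0 : (0 < m)%N by move: n0; rewrite em; nia.
have hr := ltn_ord r.
rewrite em ec.
have -> : (d * (i %/ d) + r + d * c = d * (i %/ d + c) + r)%N by nia.
rewrite modlem //.
have -> : (i + d * c = d * (i %/ d + c) + i %% d)%N.
  by rewrite {1}(divn_eq i d); nia.
rewrite modlem ?ltn_pmod //.
rewrite [(d * (_ %% _))%N]mulnC divnMDl // (divn_small (ltn_pmod _ d0)) addn0.
by rewrite mulnC.
Qed.


Local Open Scope ring_scope.

Lemma sum_delta (I : finType) (a : I) (F : I -> C) :
  \sum_i ((a == i)%:R * F i) = F a.
Proof.
rewrite (bigD1 a) //= eqxx mul1r big1 ?addr0 // => i hi.
by rewrite eq_sym (negbTE hi) mul0r.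
Qed.

Lemma sum_deltar (I : finType) (a : I) (F : I -> C) :
  \sum_i (F i * (a == i)%:R) = F a.
Proof. by rewrite -[RHS](sum_delta a); apply: eq_bigr => i _; rewrite mulrC. Qed.

Definition bb (A : 'M[C]_n) i := (n - 1)%:R * A i i + A (sigma k i) (sigma k i).

Lemma PhiE (A : 'M[C]_n) i j : Phi k A i j = (i == j)%:R * bb A i - A i j.
Proof. by rewrite /Phi /bb !mxE; case: (i == j); rewrite ?mulr1n ?mulr0n ?mul1r ?mul0r. Qed.

Definition Nmx r : 'M[C]_n := \matrix_(i, j) ((rho r i == j)%:R).
Definition Mmx r : 'M[C]_n := \matrix_(i, j) ((rho r j == i)%:R).

Lemma pullE r (A : 'M[C]_n) i j :
  (Nmx r *m A *m adjmx (Nmx r)) i j = A (rho r i) (rho r j).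
Proof.
rewrite !mxE.
under eq_bigr do rewrite !mxE rmorph_nat.
under eq_bigr do (under eq_bigr do rewrite mxE; rewrite sum_delta).
by rewrite sum_deltar.
Qed.

Lemma bb_pull r (A : 'M[C]_n) i :
  bb (Nmx r *m A *m adjmx (Nmx r)) i = bb A (rho r i).
Proof. by rewrite /bb !pullE rho_sigma. Qed.

Definition cnt r (i : 'I_n) : C := \sum_m ((rho r m == i)%:R).

Lemma pushE r (B : 'M[C]_n) i j : (Mmx r *m B *m adjmx (Mmx r)) i j =
  \sum_l \sum_m ((rho r m == i)%:R * (rho r l == j)%:R * B m l).
Proof.
rewrite !mxE; apply: eq_bigr => l _; rewrite !mxE rmorph_nat mulr_suml.
by apply: eq_bigr => m _; rewrite mxE mulrAC.
Qed.

Lemma keyE r (A : 'M[C]_n) i j :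
  (Mmx r *m Phi k (Nmx r *m A *m adjmx (Nmx r)) *m adjmx (Mmx r)) i j =
  (i == j)%:R * cnt r i * bb A i - cnt r i * cnt r j * A i j.
Proof.
rewrite pushE.
have e l m : (rho r m == i)%:R * (rho r l == j)%:R *
    Phi k (Nmx r *m A *m adjmx (Nmx r)) m l =
    (l == m)%:R * ((rho r l == i)%:R * (rho r l == j)%:R * bb A i)
    - (rho r m == i)%:R * (rho r l == j)%:R * A i j.
  rewrite PhiE bb_pull pullE.
  case: (m =P l) => [->|hml].
    rewrite eqxx mul1r.
    case: (rho r l =P i) => [<-|_]; case: (rho r l =P j) => [<-|_];
      rewrite /=; ring.
  have h1 : (m == l) = false by apply/eqP.
  have h2 : (l == m) = false by apply/eqP => h; apply: hml; rewrite h.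
  rewrite h2.
  case: (rho r m =P i) => [<-|_]; case: (rho r l =P j) => [<-|_];
    rewrite /=; ring.
under eq_bigr => l _ do rewrite (eq_bigr _ (fun m _ => e l m)) sumrB sum_delta -!mulr_suml.
rewrite sumrB /cnt; congr (_ - _).
  rewrite -mulr_suml mulr_sumr; congr (_ * _); apply: eq_bigr => l _.
  case: (rho r l =P i) => [hi|hi]; case: (rho r l =P j) => [hj|hj] /=.
  - by rewrite -hi -hj eqxx /=; ring.
  - have -> : (i == j) = false by apply/eqP => h; apply: hj; rewrite hi.
    rewrite /=; ring.
  - rewrite /=; ring.
  - rewrite /=; ring.
by rewrite -mulr_suml -mulr_sumr.
Qed.

Lemma cntE r i : cnt r i = (i %% d == r)%N%:R * d%:R.
Proof.
rewrite /cnt; under eq_bigr do rewrite rhoP.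
case: (i %% d =P r)%N => h /=.
  rewrite mul1r.
  under eq_bigr do rewrite andbT.
  rewrite -natr_sum cnt_nat //.
  have h1 : (i %/ d < n %/ d)%N by rewrite ltn_divLR // divnK.
  have e := divnK dn. nia.
by rewrite mul0r big1 // => m _; rewrite andbF.
Qed.

Definition io (i : 'I_n) : 'I_d := Ordinal (ltn_pmod i d0).
Lemma modE (i : 'I_n) (r : 'I_d) : (i %% d == r)%N = (io i == r).
Proof. by rewrite -val_eqE. Qed.

Definition G (A : 'M[C]_n) := (d%:R)^-1 *:
  \sum_(r < d) (Mmx r *m Phi k (Nmx r *m A *m adjmx (Nmx r)) *m adjmx (Mmx r)).

Lemma dnz : (d%:R : C) != 0.
Proof. by rewrite pnatr_eq0 -lt0n. Qed.

Lemma GE A i j : G A i j = (i == j)%:R * bb A i - d%:R * (i %% d == j %% d)%N%:R * A i j.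
Proof.
rewrite /G !mxE summxE.
under eq_bigr do rewrite keyE !cntE !modE.
have e1 r : (i==j)%:R * ((io i == r)%:R * d%:R) * bb A i =
   (io i == r)%:R * ((i==j)%:R * d%:R * bb A i) by ring.
have e2 r : (io i == r)%:R * d%:R * ((io j == r)%:R * d%:R) * A i j =
   (io i == r)%:R * ((io j == r)%:R * (d%:R * d%:R * A i j)) by ring.
under eq_bigr do rewrite e1 e2.
rewrite sumrB !sum_delta.
have -> : (io j == io i) = (i %% d == j %% d)%N by rewrite -val_eqE /= eq_sym.
have := dnz; move: (d%:R : C) => D hD.
rewrite /=; field.
done.
Qed.

Definition uu r (i : 'I_n) : C := d%:R * (i %% d == r)%N%:R - 1.
Definition Umx r : 'M[C]_n := \matrix_(i, j) ((i == j)%:R * uu r i).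
Definition F2 (A : 'M[C]_n) := (d%:R)^-1 *: \sum_(r < d) (Umx r *m A *m adjmx (Umx r)).

Lemma UE r A i j : (Umx r *m A *m adjmx (Umx r)) i j = uu r i * uu r j * A i j.
Proof.
rewrite !mxE.
under eq_bigr do rewrite !mxE rmorphM rmorph_nat.
under eq_bigr do (under eq_bigr do rewrite !mxE -mulrA; rewrite sum_delta).
rewrite (eq_bigr (fun l => (j == l)%:R * (uu r i * A i l * (uu r j)^*))); last first.
  by move=> l _; ring.
rewrite sum_delta /uu rmorphB rmorphM rmorph_nat rmorph1 rmorph_nat.
ring.
Qed.

Lemma F2E A i j : F2 A i j = (d%:R * (i %% d == j %% d)%N%:R - 1) * A i j.
Proof.
rewrite /F2 !mxE summxE.
under eq_bigr do rewrite UE /uu !modE.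
have e1 r : (d%:R * (io i == r)%:R - 1) * (d%:R * (io j == r)%:R - 1) * A i j =
  (io i == r)%:R * (d%:R * (d%:R * (io j == r)%:R - 1) * A i j)
  - ((io j == r)%:R * (d%:R * A i j) - A i j) by ring.
under eq_bigr do rewrite e1.
rewrite sumrB sum_delta sumrB sum_delta sumr_const card_ord.
have -> : (io j == io i) = (i %% d == j %% d)%N by rewrite -val_eqE /= eq_sym.
rewrite -[A i j *+ d]mulr_natl.
have := dnz; move: (d%:R : C) => D hD.
field.
done.
Qed.

Lemma decomp A : Phi k A - F2 A = G A.
Proof.
apply/matrixP => i j.
rewrite [LHS]mxE [X in _ + X]mxE PhiE F2E GE; ring.
Qed.

Lemma F2lin : linmap F2.
Proof.
move=> a X Y; apply/matrixP => i j.
rewrite F2E [(a *: X + Y) i j]mxE [(a *: X) i j]mxE [(a *: F2 X + F2 Y) i j]mxE [(a *: F2 X) i j]mxE !F2E.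
ring.
Qed.

Lemma psdF2 A : psd A -> psd (F2 A).
Proof.
move=> hA; apply: psd_scale; apply: psd_sum => r _; exact: psd_conj.
Qed.

Lemma psdG A : positive_map (Phi k : 'M[C]_n -> _) -> psd A -> psd (G A).
Proof.
move=> hP hA; apply: psd_scale; apply: psd_sum => r _; apply: psd_conj.
by apply: hP; apply: psd_conj.
Qed.

Lemma not_extremal : (1 < d)%N -> (0 < k < n)%N -> ~ extremal (Phi k : 'M[C]_n -> _).
Proof.
move=> d1 /andP[k0 kn] [hL [hP hE]].
have lin1 : linmap (fun A => Phi k A - F2 A).
  move=> a X Y; rewrite hL F2lin; move: (Phi k X) (Phi k Y) (F2 X) (F2 Y) => P P' Q Q'.
  by rewrite scalerBr opprD addrACA.
have pos1 : positive_map (fun A => Phi k A - F2 A).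
  by move=> A hA; rewrite decomp; apply: psdG.
have [l1 [l2 [_ [hl2 [_ h2]]]]] := hE _ F2 lin1 F2lin pos1 psdF2 (fun A => esym (subrK (F2 A) (Phi k A))).
pose i0 : 'I_n := Ordinal n0.
pose j0 : 'I_n := Ordinal kn.
have := h2 (delta_mx i0 j0).
move/matrixP/(_ i0 j0).
rewrite F2E [RHS]mxE PhiE !mxE !eqxx /=.
have -> : (i0 == j0) = false by rewrite -val_eqE /=; apply/eqP => h; move: k0; rewrite -h.
have : (k %% d = 0)%N by apply/eqP.
rewrite mod0n => -> /=.
rewrite mulr1 mul0r sub0r mulrN1.
rewrite mulr1 -(natrB _ (ltnW d1)) => he.
have h0 : (0 : C) <= (l2%:C)%C by rewrite ler0c.
have : (0 : C) < (d - 1)%N%:R by rewrite ltr0n subn_gt0.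
rewrite he oppr_gt0 => /(le_lt_trans h0).
by rewrite ltxx.
Qed.

End Main.

Local Open Scope ring_scope.

Theorem theorem2 (R : realType) (n k : nat) :
  (3 <= n)%N -> (1 <= k <= n - 1)%N -> gcdn n k != 1%N ->
  ~ extremal (@Phi R n k).
Proof.
move=> n3 /andP[k1 kn] g1.
have n0 : (0 < n)%N by apply: leq_trans n3.
have g0 : (0 < gcdn n k)%N by rewrite gcdn_gt0 n0.
apply: (@not_extremal R n k (gcdn n k) (dvdn_gcdl n k) (dvdn_gcdr n k) g0 n0).
  by move: g0 g1; case: (gcdn n k) => [|[|]].
by rewrite k1 /=; lia.
Qed.
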